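(* Let $i:B\to S$ be a ring homomorphism such that the functor $S\otimes_B-:{}_B\mathrm{Mod}\to{}_S\mathrm{Mod}$ is comonadic. Then $\Gamma:I^l_B(S)\to\mathrm{End}_{\mathrm{cor}}(S\otimes_BS)$ is an isomorphism of monoids.
   Context: $S$ is a $B$-bimodule via $i$. Sweedler coring $S\otimes_BS$: $S$-bimodule with comultiplication $s\otimes s'\mapsto s\otimes1\otimes s'$ and counit $s\otimes s'\mapsto ss'$; $\mathrm{End}_{\mathrm{cor}}(S\otimes_BS)$ is the monoid under composition of $S$-bimodule endomorphisms compatible with comultiplication and counit. Left $S\otimes_BS$-comodules: pairs $(Y,\theta_Y)$, $Y$ a left $S$-module, $\theta_Y:Y\to S\otimes_BY$ left $S$-linear with $\alpha_Y\theta_Y=\mathrm{id}$ ($\alpha_Y(s\otimes y)=sy$) and $(S\otimes_B\theta_Y)\theta_Y=(S\otimes_B\eta_Y)\theta_Y$, $\eta_Y(y)=1\otimes_By$. $S\otimes_B-$ is comonadic if the comparison functor $K_S(X)=(S\otimes_BX,S\otimes_B\eta_X)$ from ${}_B\mathrm{Mod}$ to left $S\otimes_BS$-comodules is an equivalence. $I_B(S)$: monoid of $B$-subbimodules of $S$ with product $IJ=\{\sum_kx_ky_k\}$ (finite sums), unit $i(B)$. $I^l_B(S)$: submonoid of those $I$ with $\mathbf m^l_I:S\otimes_BI\to S$, $s\otimes x\mapsto sx$, an isomorphism. $\Gamma(I)=(S\otimes_B\mu_I)\circ((\mathbf m^l_I)^{-1}\otimes_BS):S\otimes_BS\to S\otimes_BI\otimes_BS\to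 S\otimes_BS$, with $\mu_I:I\otimes_BS\to S$ multiplication. *)

(* Defs.v *)
(* This is exactly equality in the tensor product. *)
From HB Require Import structures.
From mathcomp Require Import all_boot all_order all_algebra.
From Stdlib Require Import ClassicalEpsilon.
Set Implicit Arguments. Unset Strict Implicit. Unset Printing Implicit Defensive.
Import GRing.Theory.
Local Open Scope ring_scope.

Section Tensor.
Variables (R : pzRingType) (M N : Type).
Variables (addM : M -> M -> M) (addN : N -> N -> N).
Variables (ract : M -> R -> M) (lact : R -> N -> N).

Definition balanced (A : zmodType) (f : M -> N -> A) : Prop :=
  [/\ forall m1 m2 n, f (addM m1 m2) n = f m1 n + f m2 n,
      forall m n1 n2, f m (addN n1 n2) = f m n1 + f m n2 &
      forall m r n, f (ract m r) n = f m (lact r n)].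

Definition tsum (A : zmodType) (f : M -> N -> A) (t : seq (M * N)) : A :=
  \sum_(p <- t) f p.1 p.2.

(* t1 = t2 in M (x)_R N *)
Definition teq (t1 t2 : seq (M * N)) : Prop :=
  forall (A : zmodType) (f : M -> N -> A), balanced f -> tsum f t1 = tsum f t2.
End Tensor.

Section Sweedler.
Variables (B S : pzRingType) (i : {rmorphism B -> S}).

Definition rS (s : S) (b : B) : S := s * i b.

Definition teqB (N : Type) (addN : N -> N -> N) (lact : B -> N -> N) :=
  @teq B S N +%R addN rS lact.

Definition teqX (X : lmodType B) :=
  teqB (+%R : X -> X -> X) (fun b x => b *: x).
Definition teqY (Y : lmodType S) :=
  teqB (+%R : Y -> Y -> Y) (fun b y => i b *: y).
Definition teqSS := teqB (+%R : S -> S -> S) (fun b s => i b * s).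

Definition balanced3 (N : Type) (addN : N -> N -> N) (lact : B -> N -> N)
    (A : zmodType) (f : S -> S -> N -> A) : Prop :=
  [/\ forall a a' u n, f (a + a') u n = f a u n + f a' u n,
      forall a u u' n, f a (u + u') n = f a u n + f a u' n,
      forall a u n n', f a u (addN n n') = f a u n + f a u n',
      forall a b u n, f (a * i b) u n = f a (i b * u) n &
      forall a u b n, f a (u * i b) n = f a u (lact b n)].

Definition tsum3 (N : Type) (A : zmodType) (f : S -> S -> N -> A)
    (t : seq (S * S * N)) : A :=
  \sum_(p <- t) f p.1.1 p.1.2 p.2.

Definition teq3 (N : Type) (addN : N -> N -> N) (lact : B -> N -> N)
    (t1 t2 : seq (S * S * N)) : Prop :=
  forall (A : zmodType) (f : S -> S -> N -> A),
    balanced3 addN lact f -> tsum3 f t1 = tsum3 f t2.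

Definition teq3X (X : lmodType B) :=
  teq3 (+%R : X -> X -> X) (fun b x => b *: x).
Definition teq3Y (Y : lmodType S) :=
  teq3 (+%R : Y -> Y -> Y) (fun b y => i b *: y).
Definition teq3SS := teq3 (+%R : S -> S -> S) (fun b s => i b * s).

Definition lscale (T : Type) (s : S) (t : seq (S * T)) : seq (S * T) :=
  [seq (s * p.1, p.2) | p <- t].
Definition rscale (t : seq (S * S)) (s : S) : seq (S * S) :=
  [seq (p.1, p.2 * s) | p <- t].
Definition tmap (T U : Type) (g : T -> U) (t : seq (S * T)) : seq (S * U) :=
  [seq (p.1, g p.2) | p <- t].
(* S (x)_B eta : S (x)_B T -> S (x)_B S (x)_B T, s (x) x |-> s (x) 1 (x) x *)
Definition Seta (T : Type) (t : seq (S * T)) : seq (S * S * T) :=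
  [seq (p.1, 1, p.2) | p <- t].
Definition Stheta (T U : Type) (th : T -> seq (S * U)) (t : seq (S * T))
  : seq (S * S * U) :=
  flatten [seq [seq (p.1, q.1, q.2) | q <- th p.2] | p <- t].
(* S (x)_B G for G : S (x)_B T -> S (x)_B U, on S (x)_B (S (x)_B T) *)
Definition SG (T U : Type) (G : seq (S * T) -> seq (S * U))
    (t : seq (S * S * T)) : seq (S * S * U) :=
  flatten [seq [seq (p.1.1, q.1, q.2) | q <- G [:: (p.1.2, p.2)]] | p <- t].
Definition alpha (Y : lmodType S) (t : seq (S * Y)) : Y :=
  \sum_(p <- t) p.1 *: p.2.

Definition is_comodule (Y : lmodType S) (th : Y -> seq (S * Y)) : Prop :=
  [/\
      forall s y z, teqY (th (s *: y + z)) (lscale s (th y) ++ th z),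
      forall y, alpha (th y) = y &
      forall y, teq3Y (Stheta th (th y)) (Seta (th y))].

(* a comodule morphism K_S(X) -> K_S(X') : a well-defined, left S-linear map
   G : S (x)_B X -> S (x)_B X' with (S (x) eta) G = (S (x) G)(S (x) eta) *)
Definition KK_morph (X X' : lmodType B) (G : seq (S * X) -> seq (S * X'))
  : Prop :=
  [/\ forall t1 t2, teqX t1 t2 -> teqX (G t1) (G t2),
      forall s t t', teqX (G (lscale s t ++ t')) (lscale s (G t) ++ G t') &
      forall t, teq3X (Seta (G t)) (SG G (Seta t))].

(* a comodule isomorphism K_S(X) -> (Y, theta) (a bijective comodule
   morphism psi : S (x)_B X -> Y) *)
Definition KY_iso (X : lmodType B) (Y : lmodType S) (th : Y -> seq (S * Y))
    (psi : seq (S * X) -> Y) : Prop :=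
  [/\ forall t1 t2, teqX t1 t2 -> psi t1 = psi t2,
      forall s t t', psi (lscale s t ++ t') = s *: psi t + psi t',
      forall t, teqY (th (psi t)) [seq (p.1, psi [:: (1, p.2)]) | p <- t],
      forall t1 t2, psi t1 = psi t2 -> teqX t1 t2 &
      forall y, exists t, psi t = y].

(* S (x)_B - is comonadic: the comparison functor
   K_S(X) = (S (x)_B X, S (x)_B eta_X) is an equivalence, i.e. it is
   faithful, full and essentially surjective. *)
Definition comonadic : Prop :=
  [/\
      forall (X X' : lmodType B) (f g : X -> X'), linear f -> linear g ->
        (forall t, teqX (tmap f t) (tmap g t)) -> f =1 g,
      forall (X X' : lmodType B) (G : seq (S * X) -> seq (S * X')),
        KK_morph G ->
        exists f : X -> X', linear f /\ forall t, teqX (G t) (tmap f t) &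
      forall (Y : lmodType S) (th : Y -> seq (S * Y)), is_comodule th ->
        exists (X : lmodType B) (psi : seq (S * X) -> Y), KY_iso th psi].

Definition is_subbimod (P : S -> Prop) : Prop :=
  [/\ P 0,
      forall x y, P x -> P y -> P (x + y),
      forall x, P x -> P (- x),
      forall b x, P x -> P (i b * x) &
      forall b x, P x -> P (x * i b)].

Definition prodI (P Q : S -> Prop) : S -> Prop := fun z =>
  exists t : seq (S * S), (forall p, List.In p t -> P p.1 /\ Q p.2) /\
                          z = \sum_(p <- t) p.1 * p.2.
Definition unitI : S -> Prop := fun z => exists b, z = i b.

(* S (x)_B I : formal sums with second components in I, modulo the balanced
   biadditive maps S x I -> A *)
Definition inI (P : S -> Prop) (t : seq (S * S)) : Prop :=
  forall p, List.In p t -> P p.2.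
Definition balancedI (P : S -> Prop) (A : zmodType) (f : S -> S -> A) : Prop :=
  [/\ forall a a' x, P x -> f (a + a') x = f a x + f a' x,
      forall a x y, P x -> P y -> f a (x + y) = f a x + f a y &
      forall a b x, P x -> f (a * i b) x = f a (i b * x)].
Definition teqI (P : S -> Prop) (t1 t2 : seq (S * S)) : Prop :=
  forall (A : zmodType) (f : S -> S -> A), balancedI P f ->
    tsum f t1 = tsum f t2.

Definition mult (t : seq (S * S)) : S := \sum_(p <- t) p.1 * p.2.

(* I is in I^l_B(S) : m^l_I is an isomorphism *)
Definition in_Il (P : S -> Prop) : Prop :=
  (forall t1 t2, inI P t1 -> inI P t2 -> mult t1 = mult t2 -> teqI P t1 t2) /\
  (forall s, exists t, inI P t /\ mult t = s).

Definition minv (P : S -> Prop) (s : S) : seq (S * S) :=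
  epsilon (inhabits [::]) (fun t => inI P t /\ mult t = s).

(* Gamma(I) = (S (x) mu_I) o ((m^l_I)^{-1} (x) S) on S (x)_B S:
   s (x) s' |-> sum_k a_k (x) x_k s'  where (m^l_I)^{-1}(s) = sum_k a_k (x) x_k *)
Definition Gamma (P : S -> Prop) (t : seq (S * S)) : seq (S * S) :=
  flatten [seq [seq (q.1, q.2 * p.2) | q <- minv P p.1] | p <- t].

Definition eps (t : seq (S * S)) : S := \sum_(p <- t) p.1 * p.2.
Definition Delta (t : seq (S * S)) : seq (S * S * S) := Seta t.
(* F (x)_S F, transported to S (x)_B S (x)_B S along
   (S (x)_B S) (x)_S (S (x)_B S) ~= S (x)_B S (x)_B S,
   (a (x) u) (x)_S (v (x) c) |-> a (x) uv (x) c *)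
Definition FF (F : seq (S * S) -> seq (S * S)) (t : seq (S * S * S))
  : seq (S * S * S) :=
  flatten [seq [seq (p.1, p.2 * q.1, q.2)
               | p <- F [:: (r.1.1, r.1.2)], q <- F [:: (1, r.2)]] | r <- t].

Definition End_cor (F : seq (S * S) -> seq (S * S)) : Prop :=
  [/\
      forall t1 t2, teqSS t1 t2 -> teqSS (F t1) (F t2),
      forall s t t', teqSS (F (lscale s t ++ t')) (lscale s (F t) ++ F t'),
      forall t s, teqSS (F (rscale t s)) (rscale (F t) s),
      forall t, eps (F t) = eps t &
      forall t, teq3SS (Delta (F t)) (FF F (Delta t))].

Definition eqEnd (F G : seq (S * S) -> seq (S * S)) : Prop :=
  forall t, teqSS (F t) (G t).

End Sweedler.

(* Main.v *)
Require Import Defs.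
From HB Require Import structures.
From mathcomp Require Import all_boot all_order all_algebra.
From mathcomp Require boolp.
From Stdlib Require Import ClassicalEpsilon ProofIrrelevance FunctionalExtensionality PropExtensionality.
Set Implicit Arguments. Unset Strict Implicit. Unset Printing Implicit Defensive.
Import GRing.Theory.
Local Open Scope ring_scope.

Section Basics.
Variables (B S : pzRingType) (i : {rmorphism B -> S}).

Definition balSS (A : zmodType) (f : S -> S -> A) :=
  [/\ forall m1 m2 n, f (m1 + m2) n = f m1 n + f m2 n,
      forall m n1 n2, f m (n1 + n2) = f m n1 + f m n2 &
      forall m r n, f (m * i r) n = f m (i r * n)].

Lemma teqSSP t1 t2 : teqSS i t1 t2 <->
  (forall (A : zmodType) (f : S -> S -> A), balSS f -> tsum f t1 = tsum f t2).
Proof. by []. Qed.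

Lemma bal_l0 (A : zmodType) (f : S -> S -> A) : balSS f -> forall n, f 0 n = 0.
Proof.
case=> H1 _ _ n; have E := H1 0 0 n; rewrite addr0 in E.
by apply: (@addrI _ (f 0 n)); rewrite addr0 -E.
Qed.

Lemma bal_r0 (A : zmodType) (f : S -> S -> A) : balSS f -> forall m, f m 0 = 0.
Proof.
case=> _ H1 _ m; have E := H1 m 0 0; rewrite addr0 in E.
by apply: (@addrI _ (f m 0)); rewrite addr0 -E.
Qed.

Lemma bal_sumr (A : zmodType) (f : S -> S -> A) (I : Type) (u : seq I) (F : I -> S) m :
  balSS f -> f m (\sum_(x <- u) F x) = \sum_(x <- u) f m (F x).
Proof.
move=> Hf; have [_ H2 _] := Hf.
by apply: (big_morph (f m) (H2 m) (bal_r0 Hf m)).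
Qed.

Lemma bal_suml (A : zmodType) (f : S -> S -> A) (I : Type) (u : seq I) (F : I -> S) n :
  balSS f -> f (\sum_(x <- u) F x) n = \sum_(x <- u) f (F x) n.
Proof.
move=> Hf; have [H1 _ _] := Hf.
by apply: (big_morph (f^~ n) (fun a b => H1 a b n) (bal_l0 Hf n)).
Qed.

Lemma tsum_cat (A : zmodType) (f : S -> S -> A) t t' : tsum f (t ++ t') = tsum f t + tsum f t'.
Proof. by rewrite /tsum big_cat. Qed.

Lemma tsum_cons (A : zmodType) (f : S -> S -> A) p t : tsum f (p :: t) = f p.1 p.2 + tsum f t.
Proof. by rewrite /tsum big_cons. Qed.

Lemma tsum_nil (A : zmodType) (f : S -> S -> A) : tsum f [::] = 0.
Proof. by rewrite /tsum big_nil. Qed.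

Lemma teqSS_refl t : teqSS i t t.
Proof. by move=> A f _. Qed.
Lemma teqSS_sym t1 t2 : teqSS i t1 t2 -> teqSS i t2 t1.
Proof. by move=> H A f Hf; rewrite (H A f Hf). Qed.
Lemma teqSS_trans t1 t2 t3 : teqSS i t1 t2 -> teqSS i t2 t3 -> teqSS i t1 t3.
Proof. by move=> H H' A f Hf; rewrite (H A f Hf) (H' A f Hf). Qed.
Lemma teqSS_cat t1 t2 t1' t2' : teqSS i t1 t2 -> teqSS i t1' t2' ->
  teqSS i (t1 ++ t1') (t2 ++ t2').
Proof. by move=> H H' A f Hf; rewrite !tsum_cat (H A f Hf) (H' A f Hf). Qed.

Lemma tsum_lscale (A : zmodType) (f : S -> S -> A) a t :
  tsum f (lscale a t) = tsum (fun m n => f (a * m) n) t.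
Proof. by rewrite /tsum /lscale big_map. Qed.
Lemma tsum_rscale (A : zmodType) (f : S -> S -> A) t s :
  tsum f (rscale t s) = tsum (fun m n => f m (n * s)) t.
Proof. by rewrite /tsum /rscale big_map. Qed.

Lemma balSS_l (A : zmodType) (f : S -> S -> A) a : balSS f -> balSS (fun m n => f (a * m) n).
Proof.
case=> H1 H2 H3; split=> *; first by rewrite mulrDr H1.
  by rewrite H2.
by rewrite mulrA H3.
Qed.
Lemma balSS_r (A : zmodType) (f : S -> S -> A) s : balSS f -> balSS (fun m n => f m (n * s)).
Proof.
case=> H1 H2 H3; split=> *; first by rewrite H1.
  by rewrite mulrDl H2.
by rewrite H3 mulrA.
Qed.

Lemma teqSS_lscale a t1 t2 : teqSS i t1 t2 -> teqSS i (lscale a t1) (lscale a t2).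
Proof. by move=> H A f Hf; rewrite !tsum_lscale (H _ _ (balSS_l a Hf)). Qed.
Lemma teqSS_rscale s t1 t2 : teqSS i t1 t2 -> teqSS i (rscale t1 s) (rscale t2 s).
Proof. by move=> H A f Hf; rewrite !tsum_rscale (H _ _ (balSS_r s Hf)). Qed.

Lemma lscale1 (T : Type) (t : seq (S * T)) : lscale 1 t = t.
Proof. by rewrite /lscale; elim: t => [|[a b] t IH] //=; rewrite mul1r IH. Qed.

End Basics.

Section InLemmas.
Variable (S : pzRingType).
Lemma inI_cons (P : S -> Prop) p u : inI P (p :: u) <-> P p.2 /\ inI P u.
Proof.
split.
  by move=> H; split; [apply: H; left | move=> q Hq; apply: H; right].
by case=> H1 H2 q [<-|Hq] //; apply: H2.
Qed.
Lemma inI_nil (P : S -> Prop) : inI P [::].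
Proof. by []. Qed.
Lemma inI_cat (P : S -> Prop) u v : inI P u -> inI P v -> inI P (u ++ v).
Proof.
elim: u => [|p u IH] /= H0 H3 //; have [H1 H2] := proj1 (inI_cons P p u) H0.
apply/(inI_cons P); split=> //; exact: IH.
Qed.
Lemma inI_map (P : S -> Prop) (T : Type) (F : T -> S * S) u :
  (forall x, List.In x u -> P (F x).2) -> inI P (map F u).
Proof.
elim: u => [|x u IH] /= H; first exact: inI_nil.
apply/(inI_cons P); split; first by apply: H; left.
by apply: IH => y Hy; apply: H; right.
Qed.
Lemma in_In (T : eqType) (x : T) u : x \in u -> List.In x u.
Proof.
elim: u => [|y u IH] //; rewrite in_cons => /orP [/eqP ->|/IH H]; by [left|right].
Qed.
Lemma mult_cat (u v : seq (S * S)) : mult (u ++ v) = mult u + mult v.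
Proof. by rewrite /mult big_cat. Qed.
End InLemmas.

Section GammaSec.
Variables (B S : pzRingType) (i : {rmorphism B -> S}).

Lemma sum_Gamma (P : S -> Prop) (A : zmodType) (F : S * S -> A) t :
  \sum_(a <- Gamma P t) F a = \sum_(p <- t) \sum_(q <- minv P p.1) F (q.1, q.2 * p.2).
Proof. by rewrite /Gamma big_flatten /= big_map; apply: eq_bigr => p _; rewrite big_map. Qed.

Variables (P : S -> Prop) (HP : is_subbimod i P) (HIl : in_Il i P).

Lemma minvP s : inI P (minv P s) /\ mult (minv P s) = s.
Proof.
rewrite /minv; apply: (epsilon_spec (inhabits [::]) (fun t => inI P t /\ mult t = s)).
by case: HIl => _ /(_ s).
Qed.

Lemma teqI_use (A : zmodType) (f : S -> S -> A) u1 u2 : inI P u1 -> inI P u2 ->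
  mult u1 = mult u2 -> balancedI i P f -> tsum f u1 = tsum f u2.
Proof. case: HIl => H _ h1 h2 hm; exact: H. Qed.

Lemma balI_of (A : zmodType) (g : S -> S -> A) c :
  balSS i g -> balancedI i P (fun a x => g a (x * c)).
Proof.
case=> H1 H2 H3; split=> *; [by rewrite H1 | by rewrite mulrDl H2 | by rewrite H3 mulrA].
Qed.

Definition GS (A : zmodType) (g : S -> S -> A) s s' :=
  \sum_(q <- minv P s) g q.1 (q.2 * s').

Lemma GS_rep (A : zmodType) (g : S -> S -> A) s s' u : balSS i g -> inI P u ->
  mult u = s -> GS g s s' = \sum_(q <- u) g q.1 (q.2 * s').
Proof.
move=> Hg Hu Hm; have [H1 H2] := minvP s.
have := teqI_use (f := fun a x => g a (x * s')) H1 Hu _ (balI_of s' Hg).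
rewrite /tsum /GS; apply; by rewrite H2.
Qed.

Lemma tsum_Gamma (A : zmodType) (g : S -> S -> A) t :
  tsum g (Gamma P t) = tsum (GS g) t.
Proof. by rewrite /tsum sum_Gamma. Qed.

Lemma GS_bal (A : zmodType) (g : S -> S -> A) : balSS i g -> balSS i (GS g).
Proof.
move=> Hg; have [H1 H2 H3] := Hg; split.
- move=> s1 s2 n; have [a1 b1] := minvP s1; have [a2 b2] := minvP s2.
  rewrite (@GS_rep _ _ _ _ (minv P s1 ++ minv P s2)) //.
  + by rewrite big_cat.
  + exact: inI_cat.
  + by rewrite mult_cat b1 b2.
- by move=> m n1 n2; rewrite /GS -big_split; apply: eq_bigr => q _; rewrite mulrDr H2.
- move=> m r n; have [a1 b1] := minvP m.
  rewrite (@GS_rep _ _ _ _ [seq (q.1, q.2 * i r) | q <- minv P m]) //.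
  + by rewrite big_map /GS; apply: eq_bigr => q _ /=; rewrite mulrA.
  + apply: inI_map => x Hx /=; have [_ _ _ _ H5] := HP; apply: H5; exact: a1.
  + rewrite -[in RHS]b1 /mult mulr_suml big_map; apply: eq_bigr => q _ /=; by rewrite mulrA.
Qed.

Lemma Gamma_End : End_cor i (Gamma P).
Proof.
split.
- move=> t1 t2 H A g Hg; rewrite !tsum_Gamma; exact: H _ _ (GS_bal Hg).
- move=> s t t' A g Hg; rewrite tsum_Gamma !tsum_cat. rewrite (tsum_Gamma g t') !tsum_lscale (tsum_Gamma _ t).
  congr (_ + _); rewrite /tsum; apply: eq_bigr => p _ /=.
  have [a1 b1] := minvP p.1.
  rewrite (@GS_rep _ _ _ _ (lscale s (minv P p.1))) //.
  + by rewrite /lscale big_map.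
  + by apply: inI_map => x Hx /=; apply: a1.
  + by rewrite -[in RHS]b1 /mult /lscale big_map mulr_sumr; apply: eq_bigr => q _; rewrite mulrA.
- move=> t s A g Hg; rewrite tsum_Gamma tsum_rscale tsum_rscale tsum_Gamma.
  rewrite /tsum /GS; apply: eq_bigr => p _; apply: eq_bigr => q _; by rewrite mulrA.
- move=> t; rewrite /eps sum_Gamma /=; apply: eq_bigr => p _.
  have [a1 b1] := minvP p.1.
  rewrite -{2}b1 /mult mulr_suml; apply: eq_bigr => q _; by rewrite mulrA.
- move=> t A g3 Hg3; have [G1 G2 G3 G4 G5] := Hg3.
  rewrite /tsum3 /Delta /Seta big_map sum_Gamma /FF big_flatten big_map big_map.
  apply: eq_bigr => p _; rewrite big_allpairs_dep /= !sum_Gamma !big_seq1 /=.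
  have [a1 b1] := minvP p.1; have [c1 d1] := minvP 1.
  apply: eq_big_seq => q /in_In Hq.
  have Pq : P q.2 by apply: a1.
  have := @teqI_use _ (fun a x => g3 q.1 a (x * p.2))
     [seq (q.2 * 1 * w.1, w.2) | w <- minv P 1] [:: (1, q.2)].
  rewrite /tsum big_map big_seq1 /= => H; rewrite sum_Gamma big_seq1 /= -H //.
  + by apply: inI_map => x Hx /=; apply: c1.
  + by apply/(inI_cons P); split.
  + transitivity (q.2 * 1 * mult (minv P 1)); last by rewrite d1 /mult big_seq1 /= !mulr1 mul1r.
    by rewrite /mult big_map mulr_sumr; apply: eq_bigr => w _; rewrite mulrA.
  + split=> *; [by rewrite G2 | by rewrite mulrDl G3 | by rewrite G5 mulrA].
Qed.

End GammaSec.

Section Unit.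
Variables (B S : pzRingType) (i : {rmorphism B -> S}).

Lemma minvU s : inI (unitI i) (minv (unitI i) s) /\ mult (minv (unitI i) s) = s.
Proof.
rewrite /minv; apply: (epsilon_spec (inhabits [::]) (fun t => inI (unitI i) t /\ mult t = s)).
exists [:: (s, i 1)]; split.
  by apply/(inI_cons (unitI i)); split; [exists 1 | exact: inI_nil].
by rewrite /mult big_seq1 /= rmorph1 mulr1.
Qed.

Lemma sum_unit (A : zmodType) (g : S -> S -> A) u n : balSS i g ->
  inI (unitI i) u -> \sum_(q <- u) g q.1 (q.2 * n) = g (mult u) n.
Proof.
move=> Hg; have [H1 _ H3] := Hg.
elim: u => [|q u IH] H.
  by rewrite big_nil /mult big_nil (bal_l0 Hg).
have [[b Hb] Hu] := proj1 (inI_cons _ q u) H.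
by rewrite big_cons IH // /mult big_cons H1 Hb H3.
Qed.

Lemma Gamma_unit : eqEnd i (Gamma (unitI i)) id.
Proof.
move=> t A g Hg; rewrite /tsum sum_Gamma; apply: eq_bigr => p _ /=.
have [H1 H2] := minvU p.1.
by rewrite sum_unit // H2.
Qed.
End Unit.

Section Prod.
Variables (B S : pzRingType) (i : {rmorphism B -> S}).
Variables (P Q : S -> Prop) (HP : is_subbimod i P) (HIP : in_Il i P)
  (HQ : is_subbimod i Q) (HIQ : in_Il i Q).

Lemma minvPQ s : inI (prodI P Q) (minv (prodI P Q) s) /\ mult (minv (prodI P Q) s) = s.
Proof.
rewrite /minv.
apply: (epsilon_spec (inhabits [::]) (fun t => inI (prodI P Q) t /\ mult t = s)).
exists (flatten [seq [seq (c.1, c.2 * q.2) | c <- minv P q.1] | q <- minv Q s]).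
have [m1 m2] := minvP HIQ s.
split.
  elim: (minv Q s) m1 => [|q u IH] /= Hu; first exact: inI_nil.
  have [Hq Hu'] := proj1 (inI_cons _ q u) Hu.
  apply: inI_cat; last exact: IH.
  apply: inI_map => c Hc /=.
  exists [:: (c.2, q.2)]; split; last by rewrite big_seq1.
  move=> x [<-|[]] /=; split => //.
  by apply: (proj1 (minvP HIP q.1)).
rewrite -[in RHS]m2 /mult big_flatten big_map; apply: eq_bigr => q _.
have [_ n2] := minvP HIP q.1.
by rewrite big_map -[in RHS]n2 /mult mulr_suml; apply: eq_bigr => c _; rewrite mulrA.
Qed.

Lemma Gamma_prod : eqEnd i (Gamma (prodI P Q)) (Gamma P \o Gamma Q).
Proof.
move=> t A g Hg /=; rewrite (tsum_Gamma P g (Gamma Q t)) tsum_Gamma /tsum sum_Gamma.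
apply: eq_bigr => p _; rewrite /GS.
pose H w v := GS P g w (v * p.2).
have HH : balancedI i Q H.
  have [K1 K2 K3] := GS_bal HP HIP Hg.
  split=> *; rewrite /H; [by rewrite K1 | by rewrite mulrDl K2 | by rewrite K3 mulrA].
have claim : forall u, inI (prodI P Q) u -> exists v, [/\ inI Q v, mult v = mult u &
    \sum_(d <- u) g d.1 (d.2 * p.2) = tsum H v].
  elim=> [|d u IH] Hu.
    by exists [::]; split; [exact: inI_nil | | rewrite /tsum !big_nil].
  have [[e [He1 He2]] Hu'] := proj1 (inI_cons _ d u) Hu.
  have [v [Hv1 Hv2 Hv3]] := IH Hu'.
  exists ([seq (d.1 * x.1, x.2) | x <- e] ++ v); split.
  - by apply: inI_cat => //; apply: inI_map => x /He1 [].
  - rewrite mult_cat Hv2 /mult big_cons He2 mulr_sumr big_map; congr (_ + _).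
    by apply: eq_bigr => x _; rewrite mulrA.
  - rewrite big_cons tsum_cat Hv3 /tsum big_map; congr (_ + _).
    rewrite He2 mulr_suml (bal_sumr _ _ _ Hg); apply: eq_big_seq => x /in_In Hx /=.
    rewrite /H (@GS_rep _ _ _ _ HIP _ _ _ _ [:: (d.1, x.1)]) //.
    + by rewrite big_seq1 mulrA.
    + by apply/(inI_cons P); split; [exact: (proj1 (He1 x Hx)) | exact: inI_nil].
    + by rewrite /mult big_seq1.
have [a1 a2] := minvPQ p.1.
have [v [Hv1 Hv2 Hv3]] := claim _ a1.
rewrite Hv3; have [b1 b2] := minvP HIQ p.1.
by apply: (teqI_use HIQ) => //; rewrite Hv2 a2 b2.
Qed.
End Prod.

Section Generic.
Variables (S : pzRingType) (T : Type).
Lemma tsumG_cat (A : zmodType) (f : S -> T -> A) t t' :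
  tsum f (t ++ t') = tsum f t + tsum f t'.
Proof. by rewrite /tsum big_cat. Qed.
Lemma tsumG_lscale (A : zmodType) (f : S -> T -> A) a t :
  tsum f (lscale a t) = tsum (fun m n => f (a * m) n) t.
Proof. by rewrite /tsum /lscale big_map. Qed.
Lemma tsumG_seq1 (A : zmodType) (f : S -> T -> A) p : tsum f [:: p] = f p.1 p.2.
Proof. by rewrite /tsum big_seq1. Qed.
Lemma tsumG_nil (A : zmodType) (f : S -> T -> A) : tsum f [::] = 0.
Proof. by rewrite /tsum big_nil. Qed.
End Generic.

Section FSec.
Variables (B S : pzRingType) (i : {rmorphism B -> S}).
Variables (F : seq (S * S) -> seq (S * S)) (HF : End_cor i F).

Lemma Fnil (A : zmodType) (g : S -> S -> A) : balSS i g -> tsum g (F [::]) = 0.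
Proof.
move=> Hg; have [_ H2 _ _ _] := HF.
have := H2 1 [::] [::] A g Hg; rewrite /= tsumG_cat lscale1 => E.
by apply: (@addrI _ (tsum g (F [::]))); rewrite addr0 -E.
Qed.

Lemma Fcat (A : zmodType) (g : S -> S -> A) t t' : balSS i g ->
  tsum g (F (t ++ t')) = tsum g (F t) + tsum g (F t').
Proof.
move=> Hg; have [_ H2 _ _ _] := HF.
by have := H2 1 t t' A g Hg; rewrite lscale1 tsumG_cat lscale1.
Qed.

Lemma Flin (A : zmodType) (g : S -> S -> A) c t : balSS i g ->
  tsum g (F (lscale c t)) = tsum g (lscale c (F t)).
Proof.
move=> Hg; have [_ H2 _ _ _] := HF.
by have := H2 c t [::] A g Hg; rewrite cats0 tsumG_cat (Fnil Hg) addr0.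
Qed.

Lemma Fcong (A : zmodType) (g : S -> S -> A) t t' : balSS i g -> teqSS i t t' ->
  tsum g (F t) = tsum g (F t').
Proof. by move=> Hg H; have [H1 _ _ _ _] := HF; apply: (H1 _ _ H). Qed.

Lemma Fsplit (A : zmodType) (g : S -> S -> A) t : balSS i g ->
  tsum g (F t) = \sum_(p <- t) tsum g (F [:: p]).
Proof.
move=> Hg; elim: t => [|p t IH]; first by rewrite big_nil (Fnil Hg).
by rewrite big_cons -IH -(Fcat _ _ Hg).
Qed.

Definition phi (A : zmodType) (g : S -> S -> A) s := tsum g (F [:: (s, 1)]).

Lemma phi_add (A : zmodType) (g : S -> S -> A) s s' : balSS i g ->
  phi g (s + s') = phi g s + phi g s'.
Proof.
move=> Hg; rewrite /phi -(Fcat _ _ Hg); apply: Fcong => // A' h Hh.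
by have [H1 _ _] := Hh; rewrite /tsum /= !big_cons !big_nil /= H1 !addr0.
Qed.

Lemma phi0 (A : zmodType) (g : S -> S -> A) : balSS i g -> phi g 0 = 0.
Proof.
move=> Hg; have E := phi_add 0 0 Hg; rewrite addr0 in E.
by apply: (@addrI _ (phi g 0)); rewrite addr0 -E.
Qed.

Lemma phiN (A : zmodType) (g : S -> S -> A) s : balSS i g -> phi g (- s) = - phi g s.
Proof.
move=> Hg; apply/eqP; rewrite -addr_eq0 -phi_add // addNr phi0 //.
Qed.

Lemma phi_scale (A : zmodType) (g : S -> S -> A) c s : balSS i g ->
  phi g (c * s) = phi (fun m n => g (c * m) n) s.
Proof. by move=> Hg; rewrite /phi -tsumG_lscale -(Flin _ _ Hg). Qed.

Lemma phi_rscale (A : zmodType) (g : S -> S -> A) s c : balSS i g ->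
  tsum g (F [:: (s, c)]) = phi (fun m n => g m (n * c)) s.
Proof.
move=> Hg; have [_ _ H3 _ _] := HF.
rewrite /phi -tsum_rscale -(H3 _ _ _ _ Hg); apply: Fcong => // A' h Hh.
by rewrite /= !tsumG_seq1 /= mul1r.
Qed.

Definition PF (s : S) : Prop := teqSS i (F [:: (s, 1)]) [:: (1, s)].

Lemma PFP s : PF s <-> forall (A : zmodType) (g : S -> S -> A), balSS i g -> phi g s = g 1 s.
Proof.
split => H A g Hg; first by rewrite /phi (H A g Hg) tsumG_seq1.
by rewrite tsumG_seq1 -(H A g Hg).
Qed.

Lemma PF_sub : is_subbimod i PF.
Proof.
split.
- apply/PFP => A g Hg; by rewrite phi0 // (bal_r0 Hg).
- move=> x y /PFP Hx /PFP Hy; apply/PFP => A g Hg.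
  by rewrite phi_add // Hx // Hy //; have [_ H2 _] := Hg; rewrite H2.
- move=> x /PFP Hx; apply/PFP => A g Hg.
  rewrite phiN // Hx //; apply/eqP; rewrite eq_sym -addr_eq0.
  by have [_ H2 _] := Hg; rewrite -H2 addNr (bal_r0 Hg).
- move=> b x /PFP Hx; apply/PFP => A g Hg.
  rewrite phi_scale // Hx ?mulr1; last exact: balSS_l.
  by have [_ _ H3] := Hg; rewrite -[i b]mul1r H3 mul1r.
- move=> b x /PFP Hx; apply/PFP => A g Hg.
  have -> : phi g (x * i b) = tsum g (F [:: (x, i b)]).
    apply: Fcong => // A' h Hh; rewrite !tsumG_seq1 /=.
    by have [_ _ H3] := Hh; rewrite H3 mulr1.
  by rewrite phi_rscale // Hx //; exact: balSS_r.
Qed.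

Lemma phi_mult (A : zmodType) (g : S -> S -> A) u : balSS i g -> inI PF u ->
  phi g (mult u) = \sum_(q <- u) g q.1 q.2.
Proof.
move=> Hg; elim: u => [|q u IH] Hu; first by rewrite /mult !big_nil phi0.
have [Hq Hu'] := proj1 (inI_cons _ q u) Hu.
rewrite /mult big_cons phi_add // -/(mult u) IH // big_cons; congr (_ + _).
by rewrite phi_scale // (proj1 (PFP _) Hq) ?mulr1 //; exact: balSS_l.
Qed.

End FSec.

Section Comod.
Variables (B S : pzRingType) (i : {rmorphism B -> S}).
Variables (F : seq (S * S) -> seq (S * S)) (HF : End_cor i F).

Definition thF : S^o -> seq (S * S^o) := fun s => F [:: (s, 1)].

Lemma thF_comod : is_comodule i thF.
Proof.
have [HF1 HF2 HF3 HF4 HF5] := HF.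
split.
- move=> s y z A g Hg; rewrite tsumG_cat /thF.
  rewrite -/(phi F g (s * y + z)) (phi_add HF) // (phi_scale HF) //.
  by rewrite /phi tsumG_lscale.
- move=> y; rewrite /alpha /thF.
  have E := HF4 [:: (y, 1)]; rewrite /eps big_seq1 /= mulr1 in E.
  by rewrite -[in RHS]E.
- move=> y A g3 Hg3; have [G1 G2 G3 G4 G5] := Hg3.
  have -> : tsum3 g3 (Seta (thF y)) = tsum3 g3 (FF F (Delta [:: (y, 1)])).
    exact: (HF5 [:: (y, 1)] A g3 Hg3).
  rewrite /tsum3 /Stheta /FF /Delta /Seta /= big_flatten big_map /= cats0.
  rewrite big_allpairs_dep /=; apply: eq_bigr => p _.
  rewrite big_map.
  have Hb : balSS i (g3 p.1) by split=> *; [rewrite G2 | rewrite G3 | rewrite G5].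
  have E := Flin HF p.2 [:: (1, 1)] Hb; rewrite /= mulr1 in E.
  move: E; rewrite /tsum /= big_map => E; rewrite /thF E.
  by apply: eq_bigr.
Qed.
End Comod.

Section Surj.
Variables (B S : pzRingType) (i : {rmorphism B -> S}).
Variables (F : seq (S * S) -> seq (S * S)) (HF : End_cor i F).
Variables (X : lmodType B) (psi : seq (S * X) -> S^o) (Hpsi : KY_iso i (thF F) psi).
Hypothesis Hfull : forall (X X' : lmodType B) (G : seq (S * X) -> seq (S * X')),
  KK_morph i G -> exists f : X -> X', linear f /\ forall t, teqX i (G t) (tmap f t).

Definition balX (T : lmodType B) (A : zmodType) (f : S -> T -> A) :=
  [/\ forall m1 m2 n, f (m1 + m2) n = f m1 n + f m2 n,
      forall m n1 n2, f m (n1 + n2) = f m n1 + f m n2 &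
      forall m r n, f (m * i r) n = f m (r *: n)].

Lemma teqXP (T : lmodType B) (t1 t2 : seq (S * T)) : teqX i t1 t2 <->
  (forall (A : zmodType) (f : S -> T -> A), balX f -> tsum f t1 = tsum f t2).
Proof. by []. Qed.

Definition j (x : X) : S := psi [:: (1, x)].

Lemma psi_nil : psi [::] = 0.
Proof.
have [_ K2 _ _ _] := Hpsi.
have E := K2 1 [::] [::]; rewrite /= scale1r in E.
by apply: (@addrI _ (psi [::])); rewrite addr0 -E.
Qed.

Lemma psi_cons p t : (psi (p :: t) : S) = p.1 * j p.2 + psi t.
Proof.
have [_ K2 _ _ _] := Hpsi; case: p => a x.
by have := K2 a [:: (1, x)] t; rewrite /lscale /= mulr1 => ->.
Qed.

Lemma psi_sum t : (psi t : S) = \sum_(p <- t) p.1 * j p.2.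
Proof.
elim: t => [|p t IH]; first by rewrite psi_nil big_nil.
by rewrite psi_cons IH big_cons.
Qed.

Lemma j_add x y : j (x + y) = j x + j y.
Proof.
have [K1 _ _ _ _] := Hpsi.
have -> : j (x + y) = psi [:: (1, x); (1, y)].
  apply: K1 => A f [_ H2 _]; by rewrite /tsum !big_cons !big_nil /= H2 !addr0.
by rewrite psi_cons psi_cons psi_nil /= !mul1r addr0.
Qed.

Lemma j_scale b x : j (b *: x) = i b * j x.
Proof.
have [K1 _ _ _ _] := Hpsi.
have -> : j (b *: x) = psi [:: (i b, x)].
  apply: K1 => A f [_ _ H3]; by rewrite /tsum !big_cons !big_nil /= -H3 /rS mul1r.
by rewrite psi_cons psi_nil /= addr0.
Qed.

Lemma jP x : PF i F (j x).
Proof. have [_ _ K3 _ _] := Hpsi; exact: (K3 [:: (1, x)]). Qed.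

Definition rep (s : S) : seq (S * X) :=
  epsilon (inhabits [::]) (fun t => psi t = s).

Lemma rep_spec s : psi (rep s) = s.
Proof.
have [_ _ _ _ K5] := Hpsi.
exact: (epsilon_spec (inhabits [::]) (fun t => psi t = s) (K5 s)).
Qed.

Lemma coinv s t0 : PF i F s -> psi t0 = s ->
  teq3X i (Seta t0) [seq (1, q.1, q.2) | q <- t0].
Proof.
move=> Ps Ht0 A g3 Hg3; have [G1 G2 G3 G4 G5] := Hg3.
have [K1 K2 K3 K4 K5] := Hpsi.
pose g a s := \sum_(q <- rep s) g3 a q.1 q.2.
have gpsi : forall a t, g a (psi t) = \sum_(q <- t) g3 a q.1 q.2.
  move=> a t; apply: (K4 _ _ (rep_spec (psi t)) A (g3 a)).
  by split=> *; [rewrite G2 | rewrite G3 | rewrite G5].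
have gbal : balSS i g.
  split.
  - by move=> m1 m2 n; rewrite /g -big_split; apply: eq_bigr => q _; rewrite G1.
  - move=> m n1 n2.
    have E : (psi (rep n1 ++ rep n2) : S) = n1 + n2.
      by have := K2 1 (rep n1) (rep n2); rewrite lscale1 => ->; rewrite !rep_spec scale1r.
    by rewrite -E gpsi big_cat.
  - move=> m r n.
    have E : (psi (lscale (i r) (rep n) ++ [::]) : S) = i r * n.
      rewrite K2 psi_nil rep_spec; change (i r * n + 0 = i r * n); exact: addr0.
    rewrite -E gpsi cats0 /lscale big_map /g.
    by apply: eq_bigr => q _; rewrite G4.
have E1 := K3 t0 A g gbal; rewrite Ht0 in E1.
have E2 := Ps A g gbal.
rewrite /thF E2 tsumG_seq1 /= -{1}Ht0 gpsi in E1.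
rewrite /tsum3 !big_map /=; rewrite E1 /tsum big_map; apply: eq_bigr => q _ /=.
by rewrite gpsi big_seq1.
Qed.


Lemma PF_img s : PF i F s -> exists x, s = j x.
Proof.
move=> Ps; have [K1 K2 K3 K4 K5] := Hpsi.
have [t0 Ht0] := K5 s.
have Hco := coinv Ps Ht0.
pose G (t : seq (S * B^o)) : seq (S * X) :=
  flatten [seq lscale (p.1 * i p.2) t0 | p <- t].
have sumG : forall (A : zmodType) (h : S -> X -> A) t,
    tsum h (G t) = \sum_(p <- t) tsum h (lscale (p.1 * i p.2) t0).
  by move=> A h t; rewrite /tsum /G big_flatten big_map.
have KG : KK_morph i G.
  split.
  - move=> t1 t2 H A h Hh; have [H1 H2 H3] := Hh.
    rewrite !sumG; apply: (H A (fun a (b : B^o) => tsum h (lscale (a * i b) t0))).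
    split.
    + move=> m1 m2 n; rewrite !tsumG_lscale /tsum -big_split; apply: eq_bigr => q _.
      by rewrite /= !mulrDl H1.
    + move=> m n1 n2; rewrite !tsumG_lscale /tsum -big_split; apply: eq_bigr => q _.
      by rewrite /= rmorphD mulrDr !mulrDl H1.
    + move=> m r n; rewrite !tsumG_lscale /tsum; apply: eq_bigr => q _.
      rewrite /= /rS; change (r *: n) with (r * n); by rewrite rmorphM !mulrA.
  - move=> s' t t' A h Hh.
    rewrite /G map_cat flatten_cat -/(G t) -/(G t') !tsumG_cat; congr (_ + _).
    rewrite tsumG_lscale !sumG /lscale big_map; apply: eq_bigr => p _.
    by rewrite /tsum !big_map; apply: eq_bigr => q _; rewrite /= !mulrA.
  - move=> t A g3 Hg3; have [G1 G2 G3 G4 G5] := Hg3.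
    rewrite /tsum3 /SG /Seta !big_map big_flatten big_map /G big_flatten !big_map.
    apply: eq_bigr => p _; rewrite /= cats0 !big_map /=.
    pose c := p.1 * i p.2.
    have := Hco A (fun a u x => g3 (c * a) u x).
    rewrite /tsum3 !big_map /= => ->.
      by apply: eq_bigr => q _; rewrite mulr1 /c G4 mul1r.
    split=> *; [by rewrite mulrDr G1 | by rewrite G2 | by rewrite G3
               | by rewrite mulrA G4 | by rewrite G5].
have [f [_ Hf]] := Hfull KG.
have E := K1 _ _ (Hf [:: (1, 1)]).
exists (f 1); rewrite /j -E /G /= K2 rmorph1 mul1r scale1r psi_nil Ht0.
change (s = s + 0); by rewrite addr0.
Qed.

Lemma in_Il_PF : in_Il i (PF i F).
Proof.
have [K1 K2 K3 K4 K5] := Hpsi.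
have lift : forall t, inI (PF i F) t -> exists u, t = [seq (p.1, j p.2) | p <- u].
  elim=> [|[a y] t IH] Ht; first by exists [::].
  have [Hy Ht'] := proj1 (inI_cons _ _ _) Ht.
  have [u ->] := IH Ht'; rewrite /= in Hy; have [x ->] := PF_img Hy.
  by exists ((a, x) :: u).
split.
- move=> t1 t2 H1 H2 Hm A f Hf; have [F1 F2 F3] := Hf.
  have [u1 E1] := lift _ H1; have [u2 E2] := lift _ H2.
  have HXu : psi u1 = psi u2.
    rewrite psi_sum psi_sum; move: Hm; rewrite E1 E2 /mult !big_map; exact.
  have := K4 _ _ HXu A (fun a x => f a (j x)).
  rewrite E1 E2 /tsum !big_map; apply.
  split=> *; [ by rewrite F1 //; exact: jP
             | by rewrite j_add F2 //; exact: jP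
             | by rewrite F3 ?j_scale //; exact: jP].
- move=> s; have [t Ht] := K5 s.
  exists [seq (p.1, j p.2) | p <- t]; split.
    by apply: inI_map => x _; exact: jP.
  by rewrite -Ht psi_sum /mult big_map.
Qed.

Lemma Gamma_PF : eqEnd i (Gamma (PF i F)) F.
Proof.
move=> t A g Hg; rewrite (tsum_Gamma (PF i F) g t) (Fsplit HF _ Hg) /tsum.
apply: eq_bigr => [[a b]] _ /=.
rewrite -/(tsum g (F [:: (a, b)])) (phi_rscale HF _ _ Hg).
have [m1 m2] := minvP in_Il_PF a.
rewrite -[in RHS]m2 (phi_mult HF) //; exact: balSS_r.
Qed.

End Surj.

Definition QT (B S : pzRingType) (i : {rmorphism B -> S}) (Q : S -> Prop)
  (HQ : is_subbimod i Q) := {C : S -> Prop | exists s, C = fun y => Q (y - s)}.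

HB.instance Definition _ B S i Q HQ := boolp.gen_eqMixin (@QT B S i Q HQ).
HB.instance Definition _ B S i Q HQ := boolp.gen_choiceMixin (@QT B S i Q HQ).

Section QuotSec.
Variables (B S : pzRingType) (i : {rmorphism B -> S}) (Q : S -> Prop) (HQ : is_subbimod i Q).
Local Notation QT := (@QT B S i Q HQ).

Definition cls (s : S) : QT := exist _ (fun y => Q (y - s)) (ex_intro _ s erefl).

Lemma Q0 : Q 0. Proof. by case: HQ. Qed.
Lemma QD x y : Q x -> Q y -> Q (x + y). Proof. by case: HQ => _ H _ _ _; apply: H. Qed.
Lemma QN x : Q x -> Q (- x). Proof. by case: HQ => _ _ H _ _; apply: H. Qed.
Lemma QL b x : Q x -> Q (i b * x). Proof. by case: HQ => _ _ _ H _; apply: H. Qed.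

Lemma cls_eq s s' : Q (s - s') -> cls s = cls s'.
Proof.
move=> H; rewrite /cls.
have E : (fun y => Q (y - s)) = (fun y => Q (y - s')).
  apply: functional_extensionality => y; apply: propositional_extensionality.
  split => Hy.
    by have := QD Hy H; rewrite addrA subrK.
  by have := QD Hy (QN H); rewrite opprB addrA subrK.
move: (ex_intro _ s _) (ex_intro _ s' _); rewrite E => p1 p2.
by rewrite (proof_irrelevance _ p1 p2).
Qed.

Lemma cls_inj s s' : cls s = cls s' -> Q (s - s').
Proof.
move=> E; have := f_equal (@proj1_sig _ _) E; rewrite /= => E'.
have := f_equal (fun C => C s) E'; rewrite /= subrr => <-; exact: Q0.
Qed.

Lemma qsurj (q : QT) : exists s, q = cls s.
Proof.
case: q => C [s E]; exists s; rewrite /cls; move: (ex_intro _ s _) => p.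
subst C; by rewrite (proof_irrelevance _ p (ex_intro _ s erefl)).
Qed.

Definition qrep (q : QT) : S := epsilon (inhabits 0) (fun s => q = cls s).
Lemma qrepE q : q = cls (qrep q).
Proof. exact: (epsilon_spec (inhabits 0) (fun s => q = cls s) (qsurj q)). Qed.
Lemma qrep_cls s : Q (qrep (cls s) - s).
Proof. by apply: cls_inj; rewrite -qrepE. Qed.

Definition qadd (q q' : QT) := cls (qrep q + qrep q').
Definition qopp (q : QT) := cls (- qrep q).
Definition qzero := cls 0.
Definition qscale (b : B) (q : QT) := cls (i b * qrep q).

Lemma qaddE s t : qadd (cls s) (cls t) = cls (s + t).
Proof.
apply: cls_eq; have := QD (qrep_cls s) (qrep_cls t).
by rewrite opprD addrACA.
Qed.
Lemma qoppE s : qopp (cls s) = cls (- s).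
Proof. by apply: cls_eq; have := QN (qrep_cls s); rewrite opprB opprK addrC. Qed.
Lemma qscaleE b s : qscale b (cls s) = cls (i b * s).
Proof. by apply: cls_eq; have := QL b (qrep_cls s); rewrite mulrBr. Qed.

Lemma qaddA : associative qadd.
Proof.
move=> x y z; case: (qsurj x) => a ->; case: (qsurj y) => b ->; case: (qsurj z) => c ->.
by rewrite !qaddE addrA.
Qed.
Lemma qaddC : commutative qadd.
Proof. by move=> x y; case: (qsurj x) => a ->; case: (qsurj y) => b ->; rewrite !qaddE addrC. Qed.
Lemma qadd0 : left_id qzero qadd.
Proof. by move=> x; case: (qsurj x) => a ->; rewrite /qzero qaddE add0r. Qed.
Lemma qaddN : left_inverse qzero qopp qadd.
Proof. by move=> x; case: (qsurj x) => a ->; rewrite qoppE qaddE addNr. Qed.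

HB.instance Definition _ := GRing.isZmodule.Build QT qaddA qaddC qadd0 qaddN.

Lemma qaddRE (x y : QT) : x + y = qadd x y. Proof. by []. Qed.
Lemma qzeroRE : (0 : QT) = qzero. Proof. by []. Qed.

Lemma qscaleA a b v : qscale a (qscale b v) = qscale (a * b) v.
Proof. by case: (qsurj v) => s ->; rewrite !qscaleE mulrA rmorphM. Qed.
Lemma qscale1 : left_id 1 qscale.
Proof. by move=> v; case: (qsurj v) => s ->; rewrite qscaleE rmorph1 mul1r. Qed.
Lemma qscaleDr : right_distributive qscale +%R.
Proof.
move=> a u v; case: (qsurj u) => s ->; case: (qsurj v) => t ->.
by rewrite !qaddRE qaddE !qscaleE qaddE mulrDr.
Qed.
Lemma qscaleDl v : {morph qscale^~ v : a b / a + b}.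
Proof.
move=> a b; case: (qsurj v) => s ->.
by rewrite !qaddRE !qscaleE qaddE rmorphD mulrDl.
Qed.

HB.instance Definition _ := GRing.Zmodule_isLmodule.Build B QT qscaleA qscale1 qscaleDr qscaleDl.

End QuotSec.

Section InjSec.
Variables (B S : pzRingType) (i : {rmorphism B -> S}).
Hypothesis Hfaith : forall (X X' : lmodType B) (f g : X -> X'), linear f -> linear g ->
  (forall t, teqX i (tmap f t) (tmap g t)) -> f =1 g.
Variables (P Q : S -> Prop) (HP : is_subbimod i P) (HIP : in_Il i P)
  (HQ : is_subbimod i Q) (HIQ : in_Il i Q) (HPQ : eqEnd i (Gamma P) (Gamma Q)).

Lemma Gamma_x x : P x -> teqSS i (Gamma P [:: (x, 1)]) [:: (1, x)].
Proof.
move=> Px A g Hg; rewrite (tsum_Gamma P) /tsum !big_seq1 /=.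
rewrite (@GS_rep _ _ _ _ HIP _ _ _ _ [:: (1, x)]) //.
- by rewrite big_seq1 /= mulr1.
- by apply/(inI_cons P); split; [exact: Px | exact: inI_nil].
- by rewrite /mult big_seq1 mul1r.
Qed.

Lemma sub_PQ x : P x -> Q x.
Proof.
move=> Px.
have HT : teqSS i (Gamma Q [:: (x, 1)]) [:: (1, x)].
  exact: teqSS_trans (teqSS_sym (HPQ _)) (Gamma_x Px).
pose f := fun b : B^o => cls HQ (i b * x).
pose g := fun b : B^o => (0 : QT HQ).
have lf : linear f.
  move=> a u v; rewrite /f qaddRE.
  change (cls HQ (i (a * u + v) * x) = qadd (qscale a (cls HQ (i u * x))) (cls HQ (i v * x))).
  by rewrite qscaleE qaddE rmorphD rmorphM mulrDl mulrA.
have lg : linear g by move=> a u v; rewrite /g scaler0 addr0.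
suff Hfg : forall t, teqX i (tmap f t) (tmap g t).
  have := Hfaith lf lg Hfg 1.
  rewrite /f /g rmorph1 mul1r => E; have := cls_inj (etrans E (qzeroRE HQ)); by rewrite subr0.
move=> t A h [H1 H2 H3].
have h0 : forall m, h m 0 = 0.
  move=> m; have E := H2 m 0 0; rewrite addr0 in E.
  by apply: (@addrI _ (h m 0)); rewrite addr0 -E.
have hx : forall a, h a (cls HQ x) = 0.
  move=> a; pose h' m n := h m (cls HQ n).
  have Hh' : balSS i h'.
    split; rewrite /h'.
    - by move=> *; rewrite H1.
    - by move=> *; rewrite -qaddE -qaddRE H2.
    - by move=> m r n; rewrite /rS in H3; rewrite H3; change (h m (qscale r (cls HQ n)) = h m (cls HQ (i r * n))); rewrite qscaleE.
  have := teqSS_lscale a HT Hh'.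
  rewrite !tsum_lscale /tsum sum_Gamma !big_seq1 /= /h' mulr1 => <-.
  apply: big1_seq => q /in_In Hq /=.
  have Qq : Q q.2 by apply: (proj1 (minvP HIQ x)).
  rewrite mulr1 (@cls_eq _ _ _ _ HQ q.2 0) ?subr0 //; exact: h0.
rewrite /tsum /tmap !big_map big1 ?big1 // => p _ /=; rewrite /f /g ?h0 //.
change (h p.1 (cls HQ (i p.2 * x)) = 0).
by rewrite -qscaleE; change (h p.1 ((p.2 : B) *: cls HQ x) = 0); rewrite -H3 hx.
Qed.
End InjSec.

Theorem theorem3p5 (B S : pzRingType) (i : {rmorphism B -> S}) :
  comonadic i ->
  [/\ forall P, is_subbimod i P -> in_Il i P -> End_cor i (Gamma P),
      eqEnd i (Gamma (unitI i)) id,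
      forall P Q, is_subbimod i P -> in_Il i P -> is_subbimod i Q -> in_Il i Q ->
        eqEnd i (Gamma (prodI P Q)) (Gamma P \o Gamma Q),
      forall P Q, is_subbimod i P -> in_Il i P -> is_subbimod i Q -> in_Il i Q ->
        eqEnd i (Gamma P) (Gamma Q) -> forall x, P x <-> Q x &
      forall F, End_cor i F ->
        exists P, [/\ is_subbimod i P, in_Il i P & eqEnd i (Gamma P) F]].
Proof.
case=> Hfaith Hfull Hes; split.
- by move=> P HP HIl; apply: Gamma_End.
- exact: Gamma_unit.
- by move=> P Q HP HIP HQ HIQ; apply: Gamma_prod.
- move=> P Q HP HIP HQ HIQ H x; split.
    exact: (sub_PQ Hfaith HIP HQ HIQ H).
  exact: (sub_PQ Hfaith HIQ HP HIP (fun t => teqSS_sym (H t))).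
- move=> F HF; have [X [psi Hpsi]] := Hes _ _ (thF_comod HF).
  exists (PF i F); split.
  + exact: PF_sub.
  + exact: (in_Il_PF Hpsi Hfull).
  + exact: (Gamma_PF HF Hpsi Hfull).
Qed.
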